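(* Let $d>d'\ge1$ and $\varepsilon,\varepsilon',p>0$. Then the measure $m_p$ on $E=\mathbb{R}^d_\varepsilon\cup\mathbb{R}^{d'}_{\varepsilon'}\cup\{a^*\}$ does not have the volume doubling property with respect to $\rho$: there is no constant $C>0$ such that $m_p(B(x;2r))\le C\,m_p(B(x;r))$ for all $x\in E$ and all $r>0$, where $B(x;r)=\{y\in E:\rho(x,y)<r\}$.
   Context: For $k\ge2$, $\mathbb{R}^k_r=\{x\in\mathbb{R}^k:|x|>r\}$; $\mathbb{R}^1_r=(0,\infty)$. The space $E$ is obtained by placing $\mathbb{R}^d$ and $\mathbb{R}^{d'}$ along complementary coordinates of $\mathbb{R}^{d+d'}$ and identifying $\{x\in\mathbb{R}^d:|x|\le\varepsilon\}$ and $\{x\in\mathbb{R}^{d'}:|x|\le\varepsilon'\}$ (the point $0$ if $d'=1$) with a single point $a^*$. $m_p(A)=m^{(d)}(A\cap\mathbb{R}^d)+p\,m^{(d')}(A\cap\mathbb{R}^{d'})$ with Lebesgue measures $m^{(k)}$. $|x|_\rho=|x|-\varepsilon$ on $\mathbb{R}^d_\varepsilon$, $|x|_\rho=|x|-\varepsilon'$ on $\mathbb{R}^{d'}_{\varepsilon'}$ ($|x|_\rho=|x|$ on $(0,\infty)$ if $d'=1$), $|a^*|_\rho=0$; $\rho(x,y)=(|x|_\rho+|y|_\rho)\wedge|x-y|$ with $|x-y|:=\infty$ if one point lies in $\mathbb{R}^d_\varepsilon\cup\{a^*\}$ and the other in $\mathbb{R}^{d'}_{\varepsilon'}\cup\{a^*\}$.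 *)

(* Defs.v *)
From HB Require Import structures.
From mathcomp Require Import all_boot all_order all_algebra.
From mathcomp Require Import all_classical all_reals all_analysis.
Set Implicit Arguments. Unset Strict Implicit. Unset Printing Implicit Defensive.
Import Order.TTheory GRing.Theory Num.Theory.
Local Open Scope classical_set_scope.
Local Open Scope ring_scope.

Section Defs.
Variable R : realType.

Definition enorm (n : nat) (x : 'rV[R]_n) : R := Num.sqrt (\sum_(i < n) x 0 i ^+ 2).

Definition box (n : nat) (a b : 'rV[R]_n) : set 'rV[R]_n :=
  [set x | forall i : 'I_n, a 0 i <= x 0 i < b 0 i].
Definition box_vol (n : nat) (a b : 'rV[R]_n) : \bar R :=
  (\prod_(i < n) Num.max 0 (b 0 i - a 0 i))%:E.

(* n-dimensional Lebesgue (outer) measure: infimum of the total volume of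
   countable covers by boxes. On Borel sets this is the Lebesgue measure m^(n). *)
Definition leb (n : nat) (A : set 'rV[R]_n) : \bar R :=
  ereal_inf [set s : \bar R | exists (a b : nat -> 'rV[R]_n),
     A `<=` \bigcup_k box (a k) (b k) /\
     s = (\sum_(0 <= k <oo) box_vol (a k) (b k))%E].

(* The space E: a^* (Astar), points of R^d (Big) and of R^{d'} (Small).
   Not every vector is a point of E: see [Evalid]. *)
Inductive Espace (d d' : nat) : Type :=
  | Astar : Espace d d'
  | Big : 'rV[R]_d -> Espace d d'
  | Small : 'rV[R]_d' -> Espace d d'.
Arguments Astar {d d'}.
Arguments Big {d d'} _.
Arguments Small {d d'} _.

Section E.
Variables (d d' : nat) (eps eps' p : R).

(* R^{d'}_{eps'} = {|y| > eps'} if d' >= 2, and (0, oo) if d' = 1 *)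
Definition small_valid (y : 'rV[R]_d') : Prop :=
  if d' == 1%N then forall i : 'I_d', 0 < y 0 i else eps' < enorm y.

Definition Evalid (x : Espace d d') : Prop :=
  match x with
  | Astar => True
  | Big v => eps < enorm v
  | Small w => small_valid w
  end.

Definition rnorm (x : Espace d d') : R :=
  match x with
  | Astar => 0
  | Big v => enorm v - eps
  | Small w => if d' == 1%N then enorm w else enorm w - eps'
  end.

(* rho(x,y) = (|x|_rho + |y|_rho) /\ |x - y|, with |x - y| = oo unless both
   points lie in the same punctured component *)
Definition rho (x y : Espace d d') : R :=
  match x, y with
  | Big v, Big w => Num.min (rnorm x + rnorm y) (enorm (v - w))
  | Small v, Small w => Num.min (rnorm x + rnorm y) (enorm (v - w))
  | _, _ => rnorm x + rnorm y
  end.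

Definition ball_rho (x : Espace d d') (r : R) : set (Espace d d') :=
  [set y | Evalid y /\ rho x y < r].

Definition m_p (A : set (Espace d d')) : \bar R :=
  (leb [set v | A (Big v)] + p%:E * leb [set w | A (Small w)])%E.
End E.
End Defs.

(* Main.v *)
Require Import Defs.
From HB Require Import structures.
From mathcomp Require Import all_boot all_order all_algebra.
From mathcomp Require Import all_classical all_reals all_analysis.
From mathcomp Require Import measurable_realfun.
From mathcomp Require Import ring lra.
Import Order.TTheory GRing.Theory Num.Theory.
Local Open Scope classical_set_scope.
Local Open Scope ring_scope.
Set Implicit Arguments. Unset Strict Implicit.

Section Cov.
Variable R : realType.

Definition tl n (v : 'rV[R]_n.+1) : 'rV[R]_n := \row_i v 0 (lift ord0 i).
Definition cns n (t : R) (y : 'rV[R]_n) : 'rV[R]_n.+1 :=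
  \row_j (if unlift ord0 j is Some i then y 0 i else t).

Lemma box_vol_ge0 n (a b : 'rV[R]_n) : (0 <= box_vol a b)%E.
Proof. by rewrite lee_fin; apply: prodr_ge0 => i _; rewrite le_max lexx. Qed.

Lemma box_vol_recl n (a b : 'rV[R]_n.+1) : box_vol a b =
  ((Num.max 0 (b 0 ord0 - a 0 ord0))%:E * box_vol (tl a) (tl b))%E.
Proof.
rewrite /box_vol big_ord_recl EFinM; congr (_ * _)%E; congr (_%:E).
by apply: eq_bigr => i _; rewrite !mxE.
Qed.

Lemma cover_vol n : forall (P : pred nat) (A0 B0 : 'rV[R]_n) (a b : nat -> 'rV[R]_n),
  box A0 B0 `<=` \bigcup_(k in [set k | P k]) box (a k) (b k) ->
  (box_vol A0 B0 <= \sum_(0 <= k <oo | P k) box_vol (a k) (b k))%E.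
Proof.
elim: n => [|n IH] P A0 B0 a b cov.
  have [k Pk _] : (\bigcup_(k in [set k | P k]) box (a k) (b k)) 0.
    by apply: cov => i; case: i.
  rewrite (nneseriesD1 _ Pk); last by move=> *; exact: box_vol_ge0.
  rewrite /box_vol !big_ord0 leeDl //.
  by apply: nneseries_ge0 => *; exact: box_vol_ge0.
have [BA|AB] := leP (B0 0 ord0) (A0 0 ord0).
  rewrite box_vol_recl (_ : Num.max 0 _ = 0); last first.
    by apply/max_idPl; rewrite subr_le0.
  rewrite mul0e; apply: nneseries_ge0 => *; exact: box_vol_ge0.
pose inI k t := (a k 0 ord0 <= t < b k 0 ord0).
pose I k := [set t : R | inI k t].
pose Vr k := \prod_(i < n) Num.max 0 (tl (b k) 0 i - tl (a k) 0 i).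
have slice : forall t, A0 0 ord0 <= t < B0 0 ord0 ->
    (box_vol (tl A0) (tl B0) <=
     \sum_(0 <= k <oo | P k && inI k t)
        box_vol (tl (a k)) (tl (b k)))%E.
  move=> t tAB; apply: IH => y ybox.
  have xbox : box A0 B0 (cns t y).
    move=> i; rewrite mxE; case: unliftP => [j ->|->] //.
    by have := ybox j; rewrite !mxE.
  have [k Pk kbox] := cov _ xbox.
  exists k; first by rewrite /= Pk /=; have := kbox ord0; rewrite mxE unlift_none.
  move=> j; have := kbox (lift ord0 j); rewrite !mxE liftK.
  done.
pose A := A0 0 ord0; pose B := B0 0 ord0.
have Ik k : I k = `[a k 0 ord0, b k 0 ord0[%classic.
  by apply/seteqP; split=> x; rewrite /= in_itv.
have mI k : measurable (I k) by rewrite Ik; exact: measurable_itv.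
have lamI k : lebesgue_measure (I k) = (Num.max 0 (b k 0 ord0 - a k 0 ord0))%:E.
  rewrite Ik lebesgue_measure_itv /= lte_fin.
  case: ltP => h.
    by rewrite -EFinB; congr (_%:E); apply/esym/max_idPr; rewrite subr_ge0 ltW.
  by congr (_%:E); apply/esym/max_idPl; rewrite subr_le0.
have Vr0 k : 0 <= Vr k by apply: prodr_ge0 => i _; rewrite le_max lexx.
pose f k t : \bar R := ((P k)%:R * Vr k * \1_(I k) t)%:E.
have f0 k t : (0 <= f k t)%E.
  by rewrite lee_fin; apply: mulr_ge0; [apply: mulr_ge0 => //|]; rewrite indicE.
have mf k : measurable_fun setT (f k).
  apply/measurable_EFinP; apply: measurable_funM => //.
have sliceeq t : (\sum_(0 <= k <oo | P k && inI k t) box_vol (tl (a k)) (tl (b k)) =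
    \sum_(0 <= k <oo) f k t)%E.
  rewrite eseries_mkcond; apply: eq_eseriesr => k _.
  rewrite /f /box_vol indicE (_ : (t \in I k) = inI k t); last by apply/idP/idP; rewrite in_setE.
  by case: (P k); case: (inI k t); rewrite /= ?mul1r ?mulr1 ?mulr0 ?mul0r.
rewrite box_vol_recl.
have -> : Num.max 0 (B0 0 ord0 - A0 0 ord0) = B - A.
  by apply/max_idPr; rewrite subr_ge0 ltW.
pose D := `[A, B[%classic.
have mD : measurable D by exact: measurable_itv.
have lamD : lebesgue_measure D = (B - A)%:E.
  by rewrite lebesgue_measure_itv /= lte_fin AB -EFinB.
rewrite -lamD muleC -(@integral_cst _ _ _ lebesgue_measure D mD).
have mS : measurable_fun setT (fun t => \sum_(0 <= k <oo) f k t)%E.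
  have := @ge0_emeasurable_sum _ _ R setT f xpredT (fun k t _ _ => f0 k t) (fun k _ => mf k).
  done.
have S0 t : (0 <= \sum_(0 <= k <oo) f k t)%E by apply: nneseries_ge0 => *.
apply: (@le_trans _ _ (\int[lebesgue_measure]_(t in D) \sum_(0 <= k <oo) f k t)%E).
  apply: ge0_le_integral => //.
  - by move=> t _; exact: box_vol_ge0.
  - exact: measurable_funS mS.
  - move=> t Dt; rewrite /= -sliceeq; apply: slice; move: Dt; rewrite /D /= in_itv.
    done.
apply: (@le_trans _ _ (\int[lebesgue_measure]_(t in setT) \sum_(0 <= k <oo) f k t)%E).
  by apply: ge0_subset_integral.
rewrite integral_nneseries // (eseries_mkcond (P:=P)).
apply: lee_nneseries.
  by move=> k _ _; apply: integral_ge0.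
move=> k _.
rewrite /f.
under eq_integral do rewrite EFinM.
rewrite ge0_integralZl //; last 2 first.
- have mIk : measurable_fun setT (EFin \o (\1_(I k) : R -> R)).
    by apply/measurable_EFinP; apply: measurable_indic.
  exact: mIk.
- by rewrite lee_fin mulr_ge0.
rewrite integral_indic //.
rewrite -[X in (_ * X)%E]/(lebesgue_measure (I k `&` [set: R])) setIT lamI.
  rewrite box_vol_recl.
  case: (P k) => /=; last by rewrite mul0r mul0e.
  by rewrite mul1r muleC.
exact: mI.
Qed.

Lemma enorm_ge0 n (v : 'rV[R]_n) : 0 <= enorm v.
Proof. exact: sqrtr_ge0. Qed.

Lemma coord_le_enorm n (v : 'rV[R]_n) i : `|v 0 i| <= enorm v.
Proof.
rewrite /enorm -sqrtr_sqr; apply: ler_wsqrtr.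
rewrite (bigD1 i) //= lerDl; apply: sumr_ge0 => j _; exact: sqr_ge0.
Qed.

Lemma enorm_le n (v : 'rV[R]_n) M : 0 <= M -> (forall i, `|v 0 i| <= M) ->
  enorm v <= n%:R * M.
Proof.
move=> M0 vM; rewrite /enorm -(@ger0_norm _ (n%:R * M)) ?mulr_ge0 //.
rewrite -sqrtr_sqr; apply: ler_wsqrtr.
apply: (@le_trans _ _ (\sum_(i < n) M ^+ 2)).
  apply: ler_sum => i _; have := vM i; rewrite ler_norml => /andP[h1 h2]; nra.
rewrite sumr_const card_ord exprMn -[M ^+ 2 *+ n]mulr_natl.
apply: ler_wpM2r; first exact: sqr_ge0.
by rewrite -natrX ler_nat; case: n {v vM} => [|k] //; rewrite -[(k.+1 ^ 2)%N]/(k.+1 * k.+1)%N leq_pmulr.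
Qed.

Lemma leb_ge0 n (A : set 'rV[R]_n) : (0 <= leb A)%E.
Proof.
apply/ereal_infP => s [a [b [_ ->]]]; apply: nneseries_ge0 => *; exact: box_vol_ge0.
Qed.

Lemma leb_ge n (A : set 'rV[R]_n) A0 B0 : box A0 B0 `<=` A -> (box_vol A0 B0 <= leb A)%E.
Proof.
move=> sub; apply/ereal_infP => s [a [b [cov ->]]].
by apply: (@cover_vol n xpredT) => x /sub /cov [k _ Hk]; exists k.
Qed.

Lemma box_vol00 n : (0 < n)%N -> box_vol (0 : 'rV[R]_n) 0 = 0%E.
Proof.
by case: n => // m _; rewrite /box_vol big_ord_recl !mxE subrr maxxx mul0r.
Qed.

Lemma leb_le n (A : set 'rV[R]_n) a0 b0 : (0 < n)%N -> A `<=` box a0 b0 ->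
  (leb A <= box_vol a0 b0)%E.
Proof.
move=> n0 sub; apply: ge_ereal_inf.
exists (box_vol a0 b0) => //.
exists (fun k => if k == 0%N then a0 else 0), (fun k => if k == 0%N then b0 else 0); split.
  by move=> x /sub Hx; exists 0%N.
rewrite (nneseriesD1 _ (n:=0%N)) //; last by move=> *; exact: box_vol_ge0.
by rewrite eseries0 ?adde0 // => k _ /= k0; rewrite (negbTE k0) box_vol00.
Qed.
End Cov.

Theorem proposition2p3 (R : realType) (d d' : nat) (eps eps' p : R) :
  (1 <= d')%N -> (d' < d)%N -> 0 < eps -> 0 < eps' -> 0 < p ->
  ~ (exists C : R, 0 < C /\
       forall (x : Espace R d d'), Evalid eps eps' x ->
       forall r : R, 0 < r ->
         (m_p p (ball_rho eps eps' x (2 * r))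
            <= C%:E * m_p p (ball_rho eps eps' x r))%E).
Proof.
move=> d'0 dd' eps0 eps'0 p0 [C [C0 H]].
have d0 : (0 < d)%N := ltn_trans d'0 dd'.
pose g := eps + 1.
pose K := C * p * (4 * d%:R) ^+ d'.
pose S := K + g + 1.
pose T := 2 * d%:R * S.
have gE : g = eps + 1 by [].
have SE : S = K + g + 1 by [].
have dR : 1 <= d%:R :> R by rewrite ler1n.
have K0 : 0 <= K.
  by rewrite /K; apply: mulr_ge0; [apply: mulr_ge0; exact: ltW|apply: exprn_ge0; lra].
have g0 : 0 < g by rewrite /g; lra.
have S1 : 1 <= S by rewrite /S; lra.
have Sg : g < S by rewrite /S; lra.
have SK : K < S by rewrite /S; lra.
have T0 : 0 < T by rewrite /T; nra.
pose c := if d' == 1%N then T else T + eps'.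
pose i0 : 'I_d' := Ordinal d'0.
pose w : 'rV[R]_d' := \row_(i < d') (if i == i0 then c else 0).
have c0 : 0 <= c by rewrite /c; case: ifP => _; lra.
have enw : enorm w = c.
  rewrite /enorm (bigD1 i0) //= mxE eqxx big1 ?addr0; last first.
    by move=> i /negbTE ine; rewrite mxE ine expr2 mul0r.
  by rewrite sqrtr_sqr ger0_norm.
pose x : Espace R d d' := @Small R d d' w.
have rx : rnorm eps eps' x = T.
  by rewrite /= enw /c; case: eqP => _ //; rewrite addrK.
have xv : Evalid eps eps' x.
  rewrite /= /small_valid enw /c; case: eqP => [e1|_]; last lra.
  move=> i; rewrite mxE (_ : i == i0).
    by rewrite /c; case: eqP => _; lra.
  apply/eqP; apply: val_inj => /=; move: (ltn_ord i); rewrite {2}e1; case: (val i) => //.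
have := H x xv T T0.
have ry : forall y, small_valid eps' y -> 0 <= rnorm eps eps' (@Small R d d' y).
  move=> y; rewrite /small_valid /=; case: eqP => _; last lra.
  by move=> _; exact: enorm_ge0.
have up : (m_p p (ball_rho eps eps' x T) <= (p * (2 * T) ^+ d')%:E)%E.
  rewrite /m_p.
  have big1 : (leb [set v | ball_rho eps eps' x T (@Big R d d' v)] <= 0)%E.
    apply: (le_trans (leb_le (a0:=0) (b0:=0) d0 _)); last by rewrite box_vol00.
    move=> v [/= vv]; rewrite -[X in X + _ < _]/(rnorm eps eps' x) rx => h.
    exfalso; lra.
  have small1 : (leb [set y | ball_rho eps eps' x T (@Small R d d' y)]
                 <= ((2 * T) ^+ d')%:E)%E.
    apply: (le_trans (leb_le (a0 := w - const_mx T) (b0 := w + const_mx T) d'0 _)).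
      move=> y [yv h] i; rewrite !mxE.
      have h' : enorm (w - y) < T.
        move: h; rewrite /rho -/x rx gt_min => /orP[|//].
        have := ry y yv; lra.
      have := le_lt_trans (coord_le_enorm (w - y) i) h'.
      rewrite !mxE ltr_norml => /andP[h1 h2].
      apply/andP; split; lra.
    rewrite /box_vol lee_fin (eq_bigr (fun _ => 2 * T)); last first.
      move=> i _; rewrite !mxE.
      have -> : forall a : R, a + T - (a - T) = 2 * T by move=> a; lra.
      by apply/max_idPr; lra.
    by rewrite prodr_const card_ord.
  rewrite -[X in (_ <= X)%E]add0e EFinM; apply: leeD => //.
  by apply: lee_wpmul2l => //; rewrite lee_fin ltW.
have low : ((S ^+ d)%:E <= m_p p (ball_rho eps eps' x (2 * T)))%E.
  rewrite /m_p; apply: (@le_trans _ _ (leb [set v | ball_rho eps eps' x (2 * T) (@Big R d d' v)])); last first.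
    by apply: leeDl; apply: mule_ge0; [rewrite lee_fin ltW|exact: leb_ge0].
  apply: (le_trans _ (leb_ge (A0 := const_mx g) (B0 := const_mx (g + S)) _)); last first.
    move=> v hv.
    have vi : forall i, g <= v 0 i < g + S by move=> i; have := hv i; rewrite !mxE.
    have ev : eps < enorm v.
      have := coord_le_enorm v (Ordinal d0); have := vi (Ordinal d0).
      move=> /andP[h1 h2]; rewrite ger0_norm => [h3|]; lra.
    split => //.
    have ev2 : enorm v <= d%:R * (g + S).
      apply: enorm_le; first lra.
      by move=> i; have /andP[h1 h2] := vi i; rewrite ger0_norm; lra.
    have dgS : d%:R * g < d%:R * S by rewrite ltr_pM2l //; lra.
    rewrite /= -[X in X + _ < _]/(rnorm eps eps' x) rx /T.
    rewrite mulrDr in ev2; lra.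
  rewrite /box_vol lee_fin (eq_bigr (fun _ => S)); last first.
    move=> i _; rewrite !mxE.
    have -> : g + S - g = S by lra.
    by apply/max_idPr; lra.
  by rewrite prodr_const card_ord.
move=> HC.
have : ((S ^+ d)%:E <= (C * (p * (2 * T) ^+ d'))%:E)%E.
  apply: (le_trans low); apply: (le_trans HC); rewrite EFinM.
  by apply: lee_wpmul2l => //; rewrite lee_fin ltW.
rewrite lee_fin => hle.
have e1 : C * (p * (2 * T) ^+ d') = S ^+ d' * K.
  rewrite /K /T.
  have -> : 2 * (2 * d%:R * S) = (4 * d%:R) * S by ring.
  rewrite exprMn; ring.
have e2 : S ^+ d = S ^+ d' * S ^+ (d - d') by rewrite -exprD subnKC // ltnW.
have e3 : S <= S ^+ (d - d').
  have : (0 < d - d')%N by rewrite subn_gt0.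
  case: (d - d')%N => // m _; rewrite exprS -[X in X <= _]mulr1.
  by apply: ler_wpM2l; [lra|exact: exprn_ege1].
have Sd' : 0 < S ^+ d' by apply: exprn_gt0; lra.
have : S ^+ d' * S <= S ^+ d' * K.
  apply: (@le_trans _ _ (S ^+ d)); last by rewrite -e1.
  by rewrite e2; apply: ler_wpM2l => //; exact: ltW.
by rewrite ler_pM2l // => SK'; lra.
Qed.
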